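(* Let $T$ be a non-periodic transformation of a Lebesgue probability space $(\Omega,\mu)$. Then there exist a measurable function $f:\Omega\to\{0,1,2,\dots\}$ and a function $g:\{0,1,2,\dots\}\to\{0,1,2,\dots\}$ such that (almost everywhere) (1) $|f(T(\omega))-f(\omega)|\le 1$ for all $\omega$; (2) for all $\omega$ and all nonnegative integers $i$, there is a point in $\{T(\omega),T^2(\omega),\dots,T^{g(i)}(\omega)\}$ at which $f$ takes a value greater than $i$.
   Context: A non-periodic transformation is a one-to-one measure preserving transformation $T$ with $\mu(\{\omega: T^i(\omega)=\omega\text{ for some } i\ge1\})=0$. *)

(* Defs.v *)
From HB Require Import structures.
From mathcomp Require Import all_boot all_order all_algebra.
From mathcomp Require Import all_classical all_reals all_analysis.
Set Implicit Arguments. Unset Strict Implicit. Unset Printing Implicit Defensive.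
Import Order.TTheory GRing.Theory Num.Theory.
Local Open Scope classical_set_scope.
Local Open Scope ring_scope.

(* A Lebesgue (standard) probability space: (Om, mu) is isomorphic mod 0
   to a Borel probability space (R, nu) on the real line (equivalently, to a
   Borel probability on a Polish space). *)
Definition lebesgue_probability_space d (Om : measurableType d) (R : realType)
    (mu : probability Om R) : Prop :=
  exists (Om0 : set Om) (B : set (measurableTypeR R))
         (phi : Om -> measurableTypeR R)
         (nu : probability (measurableTypeR R) R),
    [/\ measurable Om0, mu Om0 = 1%E, measurable B & nu B = 1%E] /\
    [/\ set_bij Om0 B phi,
        (forall A, measurable A -> measurable (Om0 `&` phi @^-1` A)),
        (forall A, measurable A -> A `<=` Om0 -> measurable (phi @` A))
      & (forall A, measurable A -> A `<=` Om0 -> mu A = nu (phi @` A))].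

Definition measure_preserving_injective d (Om : measurableType d) (R : realType)
    (mu : probability Om R) (T : Om -> Om) : Prop :=
  [/\ injective T, measurable_fun setT T
    & forall A, measurable A -> mu (T @^-1` A) = mu A].

Definition non_periodic d (Om : measurableType d) (R : realType)
    (mu : probability Om R) (T : Om -> Om) : Prop :=
  measure_preserving_injective mu T /\
  mu.-negligible [set w | exists i : nat, (0 < i)%N /\ iter i T w = w].

(* Main.v *)
Require Import Defs.
From HB Require Import structures.
From mathcomp Require Import all_boot all_order all_algebra.
From mathcomp Require Import all_classical all_reals all_analysis.
From mathcomp Require Import zify ring lra.
Import Order.TTheory GRing.Theory Num.Theory.
Local Open Scope classical_set_scope.

Module M0.
Set Implicit Arguments. Unset Strict Implicit.
Local Open Scope classical_set_scope.

Lemma nat_mfun d (Om : measurableType d) (h : Om -> nat) :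
  (forall v, measurable (h @^-1` [set v])) -> measurable_fun setT h.
Proof.
move=> H _ B _; rewrite setTI.
have -> : h @^-1` B = \bigcup_(v in B) h @^-1` [set v].
  apply/seteqP; split => [x Bx|x [v Bv hv]]; first by exists (h x).
  by rewrite /preimage /= hv.
exact: bigcup_measurable.
Qed.

Section Col.
Context d (Om : measurableType d) (U : nat -> set Om) (K : nat).
Hypothesis mU : forall j, measurable (U j).

Definition col x := find (fun j => `[< U j x >]) (iota 0 K.+1).

Lemma col_le x : (col x <= K.+1)%N.
Proof. by rewrite /col -[X in (_ <= X)%N](size_iota 0 K.+1) find_size. Qed.

Lemma col_U x : (col x <= K)%N -> U (col x) x.
Proof.
move=> h; have hs : (col x < size (iota 0 K.+1))%N by rewrite size_iota.
have := nth_find 0%N (etrans (has_find _ _) hs).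
by rewrite nth_iota // => /asboolP.
Qed.

Lemma col_min x j : (j <= K)%N -> U j x -> (col x <= j)%N.
Proof.
move=> hj hU; rewrite leqNgt; apply/negP => hlt.
have hj' : (j < K.+1)%N by lia.
have := before_find 0%N hlt; rewrite nth_iota ?add0n //.
by move/negbT/negP; apply; apply/asboolP.
Qed.

Lemma col_eq x v : col x = v <->
  (((v <= K)%N /\ U v x /\ forall j, (j < v)%N -> ~ U j x) \/
   (v = K.+1 /\ forall j, (j <= K)%N -> ~ U j x)).
Proof.
split.
  move=> <-; have := col_le x; rewrite leq_eqVlt ltnS => /orP [/eqP h|h].
    right; split => // j hj hU; have := col_min hj hU; lia.
  left; split => //; split; first exact: col_U.
  move=> j hj hU; have := col_min (leq_trans (ltnW hj) h) hU; lia.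
move=> [[h1 [h2 h3]]|[h1 h2]].
  have := col_min h1 h2; rewrite leq_eqVlt => /orP [/eqP //|h].
  have h' : (col x <= K)%N by lia.
  by have := h3 _ h (col_U h').
have := col_le x; rewrite leq_eqVlt => /orP [/eqP -> //|h].
have h' : (col x <= K)%N by lia.
by have := h2 _ h' (col_U h').
Qed.

Lemma measurable_col : measurable_fun setT col.
Proof.
apply: nat_mfun => v.
have -> : col @^-1` [set v] =
  ([set x | (v <= K)%N] `&` U v `&` \bigcap_(j in [set j | (j < v)%N]) ~` U j) `|`
  ([set x | v = K.+1] `&` \bigcap_(j in [set j | (j <= K)%N]) ~` U j).
  apply/seteqP; split => x /=.
    by move/col_eq => [[h1 [h2 h3]]|[h1 h2]]; [left|right].
  by move=> [[[h1 h2] h3]|[h1 h2]]; apply/col_eq; [left|right].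
apply: measurableU; apply: measurableI.
- apply: measurableI => //; case: (boolP (v <= K)%N) => h.
    by rewrite (_ : [set x | _] = setT) //; apply/seteqP; split.
  by rewrite (_ : [set x | _] = set0) //; apply/seteqP; split => x //=; rewrite (negbTE h).
- by apply: bigcap_measurableType => j _; exact: measurableC.
- have [->|h] := pselect (v = K.+1).
    by rewrite (_ : [set x | _] = setT) //; apply/seteqP; split.
  by rewrite (_ : [set x | _] = set0) //; apply/seteqP; split => x //=.
- by apply: bigcap_measurableType => j _; exact: measurableC.
Qed.

End Col.

Lemma chain (c K : nat) (col : nat -> nat) : (forall p, col p <= K.+1)%N ->
  forall t q0, (K.+1 - col (q0 + c) <= t)%N -> (t * c <= q0)%N ->
  exists q, [/\ (q0 <= q + t * c)%N, (q <= q0 + t * c)%N &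
     forall m, (m <= c.*2)%N -> (col (q + m) <= col (q + c))%N].
Proof.
move=> colK; elim=> [|t IH] q0 Ht Hq.
  exists q0; split; rewrite ?mul0n ?addn0 //.
  move=> m _; have := colK (q0 + m); have := colK (q0 + c); lia.
have [Hmax|Hnot] := pselect (forall m, (m <= c.*2)%N -> (col (q0 + m) <= col (q0 + c))%N).
  by exists q0; split => //; lia.
have [m Hm] : exists m, (m <= c.*2)%N /\ (col (q0 + c) < col (q0 + m))%N.
  apply: contrapT => Hn; apply: Hnot => m Hm; rewrite leqNgt; apply/negP => Hlt.
  by apply: Hn; exists m.
case: Hm => Hm Hlt.
have Hq1 : (c <= q0 + m)%N by rewrite mulSn in Hq; lia.
have := IH (q0 + m - c)%N.
rewrite subnK //.
have := colK (q0 + m); rewrite mulSn in Hq *.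
move=> h1 /(_ ltac:(lia) ltac:(lia)) [q [h2 h3 h4]].
exists q; split => //; lia.
Qed.

Section S0.
Context d (Om : measurableType d) (R : realType) (mu : probability Om R) (T : Om -> Om).
Hypothesis mT : measurable_fun setT T.
Hypothesis Tpres : forall A, measurable A -> mu (T @^-1` A) = mu A.

Lemma miter m : measurable_fun setT (iter m T).
Proof.
elim: m => [|m IH] /=; first exact: measurable_id.
exact: measurableT_comp.
Qed.

Lemma pre_iter m B : measurable B -> measurable (iter m T @^-1` B).
Proof. by move=> mB; rewrite -[_ @^-1` _]setTI; apply: (miter m). Qed.

Lemma mu_iter m B : measurable B -> mu (iter m T @^-1` B) = mu B.
Proof.
elim: m B => [|m IH] B mB //=.
have -> : (fun x => T (iter m T x)) @^-1` B = iter m T @^-1` (T @^-1` B) by [].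
rewrite IH ?Tpres //.
by rewrite -[_ @^-1` _]setTI; apply: mT.
Qed.

End S0.

End M0.
Import M0.

Module M1.
Set Implicit Arguments. Unset Strict Implicit.
Local Open Scope classical_set_scope.
Section T.
Context d (Om : measurableType d) (R : realType) (mu : probability Om R).
Lemma prob_fin (A : set Om) : measurable A -> mu A = (fine (mu A))%:E.
Proof.
move=> mA; rewrite fineK // ge0_fin_numE ?measure_ge0 //.
exact: (le_lt_trans (probability_le1 mu mA)) (ltry _).
Qed.
Lemma sum_bound (n : nat) (A : set Om) : measurable A ->
   (\sum_(i < n.+1) mu A <= 1)%E -> (mu A <= (n.+1%:R^-1)%:E)%E.
Proof.
move=> mA; rewrite (prob_fin mA) sumEFin sumr_const card_ord lee_fin => h.
rewrite lee_fin -div1r ler_pdivlMr // -mulr_natr.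
by rewrite mul1r mulr_natr.
Qed.
End T.

End M1.
Import M1.

Module M2.
Set Implicit Arguments. Unset Strict Implicit.
Local Open Scope classical_set_scope.

Section Marker.
Context d (Om : measurableType d) (R : realType) (mu : probability Om R) (T : Om -> Om).
Hypothesis mT : measurable_fun setT T.
Hypothesis Tpres : forall A, measurable A -> mu (T @^-1` A) = mu A.
Variables (c : nat) (U : nat -> set Om) (K : nat).
Hypothesis mU : forall j, measurable (U j).
Hypothesis discU : forall j x m, (0 < m <= c)%N -> U j x -> ~ U j (iter m T x).

Definition Amark := [set x | forall m, (m <= c.*2)%N ->
   (col U K (iter m T x) <= col U K (iter c T x))%N].

Lemma Amark_hit w s : exists t,
  [/\ (s < t)%N, (t <= s + (K.+1 * c).*2.+1)%N & Amark (iter t T w)].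
Proof.
have := @chain c K (fun p => col U K (iter p T w)) (fun p => col_le _ _ _)
  K.+1 (s.+1 + K.+1 * c) (leq_subr _ _) (leq_addl _ _).
move=> [q [h1 h2 h3]]; exists q; split; try lia.
move=> m hm; rewrite -!iterD addnC (addnC c); exact: h3.
Qed.

Lemma mcolT m : measurable_fun setT (col U K \o iter m T).
Proof. exact: measurableT_comp (measurable_col K mU) (miter mT m). Qed.

Lemma mcolT_pre m (B : set nat) : measurable ((col U K \o iter m T) @^-1` B).
Proof. by rewrite -[_ @^-1` _]setTI; apply: mcolT. Qed.

Lemma measurable_Amark : measurable Amark.
Proof.
have -> : Amark = \bigcup_(v in [set: nat])
   ((col U K \o iter c T) @^-1` [set v] `&`
    \bigcap_(m in [set m | (m <= c.*2)%N])
        ((col U K \o iter m T) @^-1` [set u | (u <= v)%N])).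
  apply/seteqP; split => x /=.
    by move=> hx; exists (col U K (iter c T x)) => //; split => // m hm; exact: hx.
  by move=> [v _ [/= hv hm]] m hm'; rewrite hv; exact: hm.
apply: bigcup_measurable => v _; apply: measurableI; first exact: mcolT_pre.
by apply: bigcap_measurableType => m _; exact: mcolT_pre.
Qed.

Definition Good := Amark `&` [set x | (col U K (iter c T x) <= K)%N].

Lemma Good_disj w i j : (i < j <= c)%N -> Good (iter i T w) -> Good (iter j T w) -> False.
Proof.
move=> hij [hA hK] [hA' hK'].
set x := iter i T w.
have hj : iter j T w = iter (j - i) T x by rewrite /x -iterD subnK //; lia.
rewrite hj in hA' hK'.
set m := (j - i)%N in hA' hK' hj.
have hm : (0 < m <= c)%N by rewrite /m; lia.
have e1 : (col U K (iter (c + m) T x) <= col U K (iter c T x))%N.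
  by apply: hA; lia.
have e2 : (col U K (iter c T x) <= col U K (iter (c + m) T x))%N.
  have := hA' (c - m)%N ltac:(lia).
  by rewrite -!iterD subnK; [rewrite addnC|lia].
have e3 : col U K (iter (c + m) T x) = col U K (iter c T x) by apply/eqP; rewrite eqn_leq e1 e2.
have hU := col_U hK.
have hU' : U (col U K (iter c T x)) (iter m T (iter c T x)).
  rewrite -iterD addnC -e3; apply: col_U; rewrite e3 //.
exact: (discU hm hU hU').
Qed.

Lemma measurable_Good : measurable Good.
Proof. by apply: measurableI; [exact: measurable_Amark| exact: (mcolT_pre c [set u | (u <= K)%N])]. Qed.

Lemma mu_Good : (mu Good <= (c.+1%:R^-1)%:E)%E.
Proof.
apply: (sum_bound (mu:=mu) (n:=c) measurable_Good).
pose F (i : 'I_c.+1) := iter i T @^-1` Good.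
have tF : trivIset setT F.
  move=> i j _ _ [w [hi hj]].
  case: (ltngtP i j) => h; last exact: val_inj.
    by exfalso; apply: (Good_disj _ hi hj); have := ltn_ord j; lia.
  by exfalso; apply: (Good_disj _ hj hi); have := ltn_ord i; lia.
have mF : forall i, measurable (F i) by move=> i; exact: (pre_iter mT i measurable_Good).
have <- : (\sum_(i < c.+1) mu (F i) = \sum_(i < c.+1) mu Good)%E.
  by apply: eq_bigr => i _; rewrite /F mu_iter //; exact: measurable_Good.
rewrite -(measure_bigsetU_ord mu xpredT mF tF).
by apply: probability_le1; apply: bigsetU_measurable => i _.
Qed.

Lemma mu_Amark : (mu Amark <= (c.+1%:R^-1)%:E + mu [set x | col U K x = K.+1])%E.
Proof.
have mB : measurable [set x | col U K x = K.+1].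
  have -> : [set x | col U K x = K.+1] = col U K @^-1` [set K.+1] by [].
  by rewrite -[X in measurable X]setTI; apply: (measurable_col K mU measurableT).
have mB' := pre_iter mT c mB.
rewrite -(mu_iter mT Tpres c mB).
apply: (@le_trans _ _ (mu (Good `|` iter c T @^-1` [set x | col U K x = K.+1]))).
  apply: le_measure; rewrite ?inE; [exact: measurable_Amark| exact: measurableU measurable_Good mB'|].
  move=> x hx; have := col_le U K (iter c T x); rewrite leq_eqVlt ltnS => /orP [/eqP h|h].
    by right.
  by left; split.
apply: le_trans (measureU2 mu measurable_Good mB') _.
by apply: leeD; [exact: mu_Good|].
Qed.

End Marker.

End M2.
Import M2.

Module M3.
Set Implicit Arguments. Unset Strict Implicit.
Local Open Scope classical_set_scope.

Section Bump.
Context (Om : Type) (T : Om -> Om) (A : nat -> set Om).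

Definition tent k j := minn j (k.*2 - j).
Definition bump k w := \max_(j < (k.*2).+1 | `[< A k (iter j T w) >]) tent k j.
Definition FM M w := \max_(k < M) bump k w.
Definition bnd w := exists v, forall M, (FM M w <= v)%N.

Lemma bnd_ex w : bnd w -> exists v, `[< forall M, (FM M w <= v)%N >].
Proof. by case=> v hv; exists v; apply/asboolP. Qed.

Definition fF w := if pselect (bnd w) is left H then ex_minn (bnd_ex H) else 0%N.

Lemma fP w : bnd w -> forall v, (fF w <= v)%N <-> (forall M, (FM M w <= v)%N).
Proof.
move=> hb v; rewrite /fF; case: (pselect (bnd w)) => // H.
case: ex_minnP => m /asboolP hm hmin; split.
  by move=> hv M; exact: leq_trans (hm M) hv.
by move=> hv; apply: hmin; apply/asboolP.
Qed.

Lemma FM_f w M : bnd w -> (FM M w <= fF w)%N.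
Proof. by move=> hb; move/(fP hb): (leqnn (fF w)). Qed.

Lemma bump1 k w : (bump k w <= (bump k (T w)).+1)%N.
Proof.
apply/bigmax_leqP => j /asboolP hj.
case: (posnP j) => [->|jp]; first by rewrite /tent min0n.
have hj' : (j.-1 < (k.*2).+1)%N by have := ltn_ord j; lia.
apply: (@leq_trans (tent k (Ordinal hj')).+1); first by rewrite /tent /=; lia.
rewrite ltnS; apply: (leq_bigmax_cond (Ordinal hj')) => /=.
by apply/asboolP; rewrite -iterSr prednK.
Qed.

Lemma bump2 k w : (bump k (T w) <= (bump k w).+1)%N.
Proof.
apply/bigmax_leqP => j /asboolP hj.
have := ltn_ord j; rewrite ltnS leq_eqVlt => /orP [/eqP ->|jlt].
  by rewrite /tent subnn minn0.
have hj' : (j.+1 < (k.*2).+1)%N by lia.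
apply: (@leq_trans (tent k (Ordinal hj')).+1); first by rewrite /tent /=; lia.
rewrite ltnS; apply: (leq_bigmax_cond (Ordinal hj')) => /=.
by apply/asboolP; move: hj; rewrite -iterSr.
Qed.

Lemma FM1 M w : (FM M w <= (FM M (T w)).+1)%N.
Proof.
apply/bigmax_leqP => k _; apply: leq_trans (bump1 k w) _.
by rewrite ltnS; exact: (leq_bigmax k).
Qed.

Lemma FM2 M w : (FM M (T w) <= (FM M w).+1)%N.
Proof.
apply/bigmax_leqP => k _; apply: leq_trans (bump2 k w) _.
by rewrite ltnS; exact: (leq_bigmax k).
Qed.

Lemma f_lip w : bnd w -> bnd (T w) ->
  (fF (T w) <= (fF w).+1)%N /\ (fF w <= (fF (T w)).+1)%N.
Proof.
move=> h1 h2; split.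
  apply/(fP h2) => M; apply: leq_trans (FM2 M w) _; rewrite ltnS; exact: FM_f.
apply/(fP h1) => M; apply: leq_trans (FM1 M w) _; rewrite ltnS; exact: FM_f.
Qed.

Lemma f_big w i p : bnd (iter p T w) -> A i.+1 (iter (i.+1 + p) T w) ->
  (i < fF (iter p T w))%N.
Proof.
move=> hb hA.
apply: (@leq_trans (FM i.+2 (iter p T w))); last exact: FM_f.
apply: (@leq_trans (bump i.+1 (iter p T w))); last exact: (leq_bigmax (Ordinal (ltnSn i.+1))).
have hj : (i.+1 < (i.+1.*2).+1)%N by lia.
apply: (@leq_trans (tent i.+1 (Ordinal hj))); first by rewrite /tent /=; lia.
apply: (leq_bigmax_cond (Ordinal hj)) => /=.
by apply/asboolP; rewrite -iterD.
Qed.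

Lemma bump0 k w : (forall j, (0 < j < k.*2)%N -> ~ A k (iter j T w)) -> bump k w = 0%N.
Proof.
move=> h; apply/eqP; rewrite -leqn0; apply/bigmax_leqP => j /asboolP hj.
have := ltn_ord j; rewrite /tent => hj2.
case: (posnP j) => [->|jp]; first by rewrite min0n.
case: (ltngtP j k.*2) => hjk.
- by exfalso; apply: (h j) hj; lia.
- lia.
- by rewrite hjk subnn minn0.
Qed.

Lemma bnd_of w n0 : (forall k, (n0 <= k)%N -> bump k w = 0%N) -> bnd w.
Proof.
move=> h; exists (FM n0 w) => M; apply/bigmax_leqP => k _.
case: (ltnP k n0) => hk; first exact: (leq_bigmax (Ordinal hk)).
by rewrite h.
Qed.

End Bump.

End M3.
Import M3.

Module M4.
Set Implicit Arguments. Unset Strict Implicit.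
Local Open Scope classical_set_scope.

Lemma nat_mfun_le d (Om : measurableType d) (h : Om -> nat) :
  (forall v, measurable [set w | (h w <= v)%N]) -> measurable_fun setT h.
Proof.
move=> H; apply: nat_mfun => v.
case: v => [|v].
  by have -> : h @^-1` [set 0%N] = [set w | (h w <= 0)%N] by apply/seteqP; split => x /=; lia.
have -> : h @^-1` [set v.+1] = [set w | (h w <= v.+1)%N] `\` [set w | (h w <= v)%N].
  by apply/seteqP; split => x /=; lia.
exact: measurableD.
Qed.

Section FMeas.
Context d (Om : measurableType d) (T : Om -> Om) (A : nat -> set Om).
Hypothesis mT : measurable_fun setT T.
Hypothesis mA : forall k, measurable (A k).

Lemma mFM M v : measurable [set w | (FM T A M w <= v)%N].
Proof.
have -> : [set w | (FM T A M w <= v)%N] =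
  \bigcap_(k in [set k | (k < M)%N])
   \bigcap_(j in [set j | (j <= k.*2)%N /\ ~~ (tent k j <= v)%N])
      ~` (iter j T @^-1` A k).
  apply/seteqP; split => w /=.
    move/bigmax_leqP => h k hk j [hj hv] hA.
    have h1 := h (Ordinal hk) isT.
    have hj' : (j < (k.*2).+1)%N by lia.
    have h2 : (tent k j <= bump T A k w)%N.
      apply: (@leq_bigmax_cond _ _ (fun j : 'I_(k.*2).+1 => tent k j) (Ordinal hj')).
      by apply/asboolP.
    by rewrite (leq_trans h2 h1) in hv.
  move=> h; apply/bigmax_leqP => k _; apply/bigmax_leqP => j /asboolP hA.
  rewrite leqNgt; apply/negP => hlt.
  have := ltn_ord j; rewrite ltnS => hj.
  by apply: (h k (ltn_ord k) j); [split => //; rewrite -ltnNge|].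
apply: bigcap_measurableType => k _; apply: bigcap_measurableType => j _.
exact/measurableC/(pre_iter mT).
Qed.

Lemma mBD v : measurable [set w | forall M, (FM T A M w <= v)%N].
Proof.
have -> : [set w | forall M, (FM T A M w <= v)%N] = \bigcap_M [set w | (FM T A M w <= v)%N].
  by apply/seteqP; split => [w h M _|w h M]; [exact: h| exact: h M I].
by apply: bigcapT_measurable => M; exact: mFM.
Qed.

Lemma mbnd : measurable (bnd T A).
Proof.
have -> : bnd T A = \bigcup_v [set w | forall M, (FM T A M w <= v)%N].
  by apply/seteqP; split => [w [v h]|w [v _ h]]; exists v.
by apply: bigcupT_measurable => v; exact: mBD.
Qed.

Lemma mfF : measurable_fun setT (fF T A).
Proof.
apply: nat_mfun_le => v.
have -> : [set w | (fF T A w <= v)%N] =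
   [set w | forall M, (FM T A M w <= v)%N] `|` ~` bnd T A.
  apply/seteqP; split => w /=.
    move=> h; have [hb|hb] := pselect (bnd T A w); last by right.
    by left; apply/(fP hb).
  move=> [h|hb]; last by rewrite /fF; case: pselect.
  have hb : bnd T A w by exists v.
  by apply/(fP hb).
by apply: measurableU; [exact: mBD|exact/measurableC/mbnd].
Qed.

End FMeas.

End M4.
Import M4.

Module M5.
Set Implicit Arguments. Unset Strict Implicit.
Local Open Scope classical_set_scope.
Local Open Scope ring_scope.

Lemma rat_between (R : realType) (x y : R) : x < y -> exists q : rat, x < ratr q < y.
Proof. by move=> xy; have [q] := rat_in_itvoo xy; rewrite in_itv /=; exists q. Qed.

Lemma rat_sep (R : realType) (r : R) (s : seq R) : r \notin s ->
  exists a b : rat, (ratr a < r < ratr b) /\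
    forall y, y \in s -> ~~ (ratr a < y < ratr b).
Proof.
elim: s => [_|y s IH].
  have [a /andP [_ ha]] := @rat_between R (r - 1) r ltac:(lra).
  have [b /andP [hb _]] := @rat_between R r (r + 1) ltac:(lra).
  exists a, b; split; last by [].
  by apply/andP.
rewrite in_cons negb_or => /andP [ry rs].
have [a [b [hab hs]]] := IH rs.
case/boolP: (ratr a < y < ratr b) => hy; last first.
  exists a, b; split => // z; rewrite in_cons => /orP [/eqP -> //|]; exact: hs.
move/andP: hab => [har hrb]; move/andP: hy => [hay hyb].
have [hlt|hgt] : y < r \/ r < y.
  by move: ry; rewrite neq_lt => /orP [h|h]; [right|left].
- have [q /andP [hq1 hq2]] := rat_between hlt.
  exists q, b; split; first by apply/andP.
  move=> z; rewrite in_cons => /orP [/eqP ->|hz]; first by apply/negP => /andP [h1 _]; lra.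
  apply/negP => /andP [h1 h2]; move/negP: (hs z hz); apply; apply/andP; split; lra.
- have [q /andP [hq1 hq2]] := rat_between hgt.
  exists a, q; split; first by apply/andP.
  move=> z; rewrite in_cons => /orP [/eqP ->|hz]; first by apply/negP => /andP [_ h2]; lra.
  apply/negP => /andP [h1 h2]; move/negP: (hs z hz); apply; apply/andP; split; lra.
Qed.

End M5.
Import M5.

Module M6.
Set Implicit Arguments. Unset Strict Implicit.
Local Open Scope classical_set_scope.

Section Exist.
Context d (Om : measurableType d) (R : realType) (mu : probability Om R) (T : Om -> Om).
Hypothesis mT : measurable_fun setT T.
Hypothesis Tpres : forall A, measurable A -> mu (T @^-1` A) = mu A.
Variables (S : nat -> set Om) (N : set Om).
Hypothesis mS : forall j, measurable (S j).
Hypothesis mN : measurable N.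
Hypothesis N0 : mu N = 0%E.
Hypothesis sepS : forall x, ~ N x -> forall n, exists j, S j x /\
   forall m, (0 < m <= n)%N -> ~ S j (iter m T x).

Lemma smallc (e : R) : (0 < e)%R -> exists c : nat, (c.+1%:R^-1 <= e)%R.
Proof.
move=> e0; exists (Num.bound (e^-1)).
have ei : (0 <= e^-1)%R by rewrite invr_ge0 ltW.
have h := archi_boundP ei.
set b := Num.bound _ in h *.
rewrite -(invrK e) lef_pV2 ?posrE ?invr_gt0 //.
by rewrite (le_trans (ltW h)) // ler_nat.
Qed.

Lemma marker (e : R) : (0 < e)%R -> exists (A : set Om) (L : nat),
  [/\ measurable A, (mu A <= e%:E)%E &
      forall w s, exists t, [/\ (s < t)%N, (t <= s + L)%N & A (iter t T w)]].
Proof.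
move=> e0.
have e20 : (0 < e / 2)%R by rewrite divr_gt0.
have [c hc] := smallc e20.
pose U j := S j `&` [set x | forall m, (0 < m <= c)%N -> ~ S j (iter m T x)].
have mU : forall j, measurable (U j).
  move=> j; have -> : U j = S j `&` \bigcap_(m in [set m | (0 < m <= c)%N])
      ~` (iter m T @^-1` S j).
    by apply/seteqP; split => x [h1 h2]; split => // m hm; exact: h2.
  apply: measurableI => //; apply: bigcap_measurableType => m _.
  exact/measurableC/(pre_iter mT).
have discU : forall j x m, (0 < m <= c)%N -> U j x -> ~ U j (iter m T x).
  by move=> j x m hm [_ h] [h' _]; exact: h hm h'.
pose B K := [set x | col U K x = K.+1].
have BE K : B K = [set x | forall j, (j <= K)%N -> ~ U j x].
  apply/seteqP; split => x /=; first by move/col_eq => [[h1 _]|[_ h]] //; lia.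
  by move=> h; apply/col_eq; right.
have mB K : measurable (B K).
  rewrite BE; have -> : [set x | forall j, (j <= K)%N -> ~ U j x] =
    \bigcap_(j in [set j | (j <= K)%N]) ~` U j by [].
  by apply: bigcap_measurableType => j _; exact: measurableC.
have hcap : \bigcap_K B K `<=` N.
  move=> x hx; apply: contrapT => hN.
  have [j [hj1 hj2]] := sepS hN c.
  have := hx j I; rewrite BE /= => /(_ j (leqnn j)); apply; by split.
have mcap : measurable (\bigcap_K B K) by exact: bigcapT_measurable.
have cap0 : mu (\bigcap_K B K) = 0%E.
  apply/eqP; rewrite -measure_le0 -N0; apply: le_measure; rewrite ?inE //.
have ni : nonincreasing_seq B.
  move=> n m nm; apply/subsetPset; rewrite !BE => x hx j hj; apply: hx; lia.
have fin0 : (mu (B 0%N) < +oo)%E := le_lt_trans (probability_le1 mu (mB 0%N)) (ltry _).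
have cvg := nonincreasing_cvg_mu fin0 mB mcap ni.
have cvg0 : (mu \o B) @ \oo --> (0%R)%:E.
  have e0' : (0%R)%:E = mu (\bigcap_K B K) by rewrite cap0.
  by rewrite e0'; exact: cvg.
have /fine_cvgP [_ cvg'] := cvg0.
have := cvgr_lt (f:=fine \o (mu \o B)) 0%R cvg' (e/2)%R e20.
case=> K0 _ hK0.
have hK := hK0 K0 (leqnn K0); set K := K0 in hK.
have muB : (mu (B K) <= (e/2)%:E)%E.
  by rewrite (prob_fin mu (mB K)) lee_fin; exact: ltW hK.
exists (Amark T c U K), ((K.+1 * c).*2.+1).
split.
- exact: (measurable_Amark mT c K mU).
- apply: (le_trans (mu_Amark (mu:=mu) mT Tpres K mU discU)).
  rewrite {1}(splitr e) EFinD; apply: leeD => //; by rewrite lee_fin.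
- move=> w s; exact: (Amark_hit T c U K w s).
Qed.
End Exist.

End M6.
Import M6.

Module M7.
Set Implicit Arguments. Unset Strict Implicit.
Local Open Scope classical_set_scope.

Lemma arith (R : realType) (a : R) (n : nat) : (0 <= a)%R -> ((a / n.+1%:R) *+ n <= a)%R.
Proof.
move=> a0; rewrite -mulr_natr -mulrA; apply: ler_piMr => //.
by rewrite mulrC ler_pdivrMr // mul1r ler_nat.
Qed.

Section BC.
Context d (Om : measurableType d) (R : realType) (mu : probability Om R) (T : Om -> Om).
Hypothesis mT : measurable_fun setT T.
Hypothesis Tpres : forall A, measurable A -> mu (T @^-1` A) = mu A.
Variable A : nat -> set Om.
Hypothesis mA : forall k, measurable (A k).
Hypothesis muA : forall k,
  (mu (A k) <= ((1 / (2 ^ k.+1)%:R) / (k.*2.+1)%:R)%:E)%E.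

Definition EE k := \big[setU/set0]_(j < k.*2) (iter j T @^-1` A k).

Lemma mEE k : measurable (EE k).
Proof. by apply: bigsetU_measurable => j _; exact: (pre_iter mT). Qed.

Lemma muEE k : (mu (EE k) <= (1 / (2 ^ k.+1)%:R)%:E)%E.
Proof.
apply: (le_trans (Boole_inequality mu (A := fun j => iter j T @^-1` A k) (n := k.*2) _)).
  by move=> i _; exact: (pre_iter mT).
apply: (@le_trans _ _ (\sum_(i < k.*2) ((1 / (2 ^ k.+1)%:R) / (k.*2.+1)%:R)%:E)%E).
  apply: lee_sum => i _; have := muA k; rewrite -(mu_iter mT Tpres i (mA k)).
  exact.
rewrite sumEFin sumr_const card_ord lee_fin.
exact: arith.
Qed.

Lemma LS0 : mu (lim_sup_set EE) = 0%E.
Proof.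
apply: lim_sup_set_cvg0; first exact: mEE.
apply: (le_lt_trans _ (ltry 1%R)).
apply: (le_trans _ (epsilon_trick0 xpredT ler01)).
by apply: lee_nneseries => // n _; exact: muEE.
Qed.

Lemma bnd_ae : mu.-negligible (~` [set w | forall p, bnd T A (iter p T w)]).
Proof.
have hLS : forall x, ~ lim_sup_set EE x -> bnd T A x.
  move=> x hx.
  have [n hn] : exists n, ~ (\bigcup_(j in [set j | (n <= j)%N]) EE j) x.
    apply: contrapT => h; apply: hx => n _; apply: contrapT => h'; apply: h; by exists n.
  apply: (bnd_of (n0 := n)) => k hk; apply: bump0 => j hj hAj; apply: hn; exists k => //.
  rewrite /EE -(bigcup_mkord _ (fun j => iter j T @^-1` A k)); exists j => //=; lia.
have mLS : measurable (lim_sup_set EE).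
  by apply: bigcapT_measurable => n; apply: bigcup_measurable => j _; exact: mEE.
apply: (negligibleS (A := \bigcup_p (iter p T @^-1` lim_sup_set EE))).
  move=> w /= hw; apply: contrapT => h; apply: hw => p; apply: hLS => hp.
  by apply: h; exists p.
apply: negligible_bigcup => p; apply/negligibleP; first exact: (pre_iter mT).
exact: (etrans (mu_iter mT Tpres p mLS) LS0).
Qed.

End BC.

End M7.
Import M7.

Module M8.
Set Implicit Arguments. Unset Strict Implicit.
Local Open Scope classical_set_scope.

Lemma sep d (Om : measurableType d) (R : realType) (mu : probability Om R) (T : Om -> Om) :
  lebesgue_probability_space mu -> non_periodic mu T ->
  exists (S : nat -> set Om) (N : set Om), [/\ (forall j, measurable (S j)), measurable N,
    mu N = 0%E &
    forall x, ~ N x -> forall n, exists j, S j x /\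
       forall m, (0 < m <= n)%N -> ~ S j (iter m T x)].
Proof.
move=> [Om0 [B [phi [nu [[mO0 muO0 mB nuB] [[_ phiinj _] hpre _ _]]]]]] [[Tinj mT Tpres] hper].
have [Pn [mPn Pn0 hPn]] := hper.
pose S j := if @unpickle (rat * rat)%type j is Some ab
  then Om0 `&` phi @^-1` `]ratr ab.1, ratr ab.2[ else set0.
pose N := (\bigcup_m iter m T @^-1` (~` Om0)) `|` Pn.
have mN : measurable N.
  apply: measurableU => //; apply: bigcupT_measurable => m.
  exact: (pre_iter mT m (measurableC mO0)).
exists S, N; split => //.
- move=> j; rewrite /S; case: unpickle => [[a b]|] //=.
  exact: hpre (measurable_itv _).
- apply: (measure_negligible mN); apply: negligibleU; last by exists Pn; split.
  apply: negligible_bigcup => m; apply/negligibleP.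
    exact: (pre_iter mT m (measurableC mO0)).
  apply: (etrans (mu_iter mT Tpres m (measurableC mO0))). rewrite probability_setC // muO0.
  by rewrite subee.
- move=> x hx n.
  have hO : forall m, Om0 (iter m T x).
    by move=> m; apply: contrapT => h; apply: hx; left; exists m.
  have hnp : forall i, (0 < i)%N -> iter i T x <> x.
    by move=> i hi he; apply: hx; right; apply: hPn; exists i.
  pose s := [seq phi (iter m T x) | m <- iota 1 n].
  have rs : phi x \notin s.
    apply/mapP => [[m hm he]]; rewrite mem_iota in hm.
    apply: (hnp m); first lia.
    by apply: phiinj; rewrite ?inE //; exact: (hO 0%N).
  have [a [b [hab hsep]]] := rat_sep rs.
  exists (pickle (a, b)); rewrite /S pickleK /=; split.
    by split; [exact: (hO 0%N)|rewrite /= in_itv /=].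
  move=> m hm [_ hin]; move: hin; rewrite /= in_itv /=; apply/negP.
  apply: hsep; apply/mapP; exists m => //; rewrite mem_iota; lia.
Qed.

End M8.
Import M8.

Unset Implicit Arguments.
Theorem mainTheorem8 (d : measure_display) (Om : measurableType d)
    (R : realType) (mu : probability Om R) (T : Om -> Om) :
  lebesgue_probability_space mu -> non_periodic mu T ->
  exists (f : Om -> nat) (g : nat -> nat),
    measurable_fun setT f /\
    {ae mu, forall w,
      ((f (T w) <= (f w).+1)%N /\ (f w <= (f (T w)).+1)%N) /\
      (forall i : nat, exists k : nat,
          [/\ (1 <= k)%N, (k <= g i)%N & (i < f (iter k T w))%N])}.
Proof.
move=> hL hNP.
have [[Tinj mT Tpres] _] := hNP.
have [S [N [mS mN N0 hS]]] := sep hL hNP.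
pose dk (k : nat) : R := ((1 / (2 ^ k.+1)%:R) / (k.*2.+1)%:R)%R.
have hmark : forall k : nat, exists AL : set Om * nat,
   [/\ measurable AL.1, (mu AL.1 <= (dk k)%:E)%E &
       forall w s, exists t, [/\ (s < t)%N, (t <= s + AL.2)%N & AL.1 (iter t T w)]].
  move=> k; have dk0 : (0 < dk k)%R.
    by rewrite /dk divr_gt0 // ?divr_gt0 // ltr0n // expn_gt0.
  have [A [L h]] := marker mT Tpres mS mN N0 hS dk0.
  by exists (A, L).
have [AL hAL] := choice hmark.
pose A k := (AL k).1; pose L k := (AL k).2.
have mA : forall k, measurable (A k) by move=> k; case: (hAL k).
have muA : forall k, (mu (A k) <= (dk k)%:E)%E by move=> k; case: (hAL k).
have hit : forall k w s, exists t, [/\ (s < t)%N, (t <= s + L k)%N & A k (iter t T w)].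
  by move=> k; case: (hAL k).
exists (fF T A), (fun i => L i.+1); split; first exact: mfF mT mA.
apply: (negligibleS _ (bnd_ae mT Tpres mA muA)).
move=> w hnP hW; apply: hnP; split.
  exact: (f_lip (hW 0%N) (hW 1%N)).
move=> i; have [t [h1 h2 h3]] := hit i.+1 w i.+1.
exists (t - i.+1)%N; split; [lia|lia|].
apply: f_big; first exact: hW.
by rewrite subnKC //; lia.
Qed.
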